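(* For every $k\ge1$, $G_k\cong\mathrm{Syl}_2 A_{2^k}$, the Sylow $2$-subgroup of the alternating group $A_{2^k}$.
   Context: Let $C_2=\{e,\sigma\}$ with $\sigma=(1,2)$ acting on $X=\{1,2\}$. Define $B_1=C_2$ and $B_k=B_{k-1}\wr C_2$ for $k>1$, with elements written as wreath recursions $(g_1,g_2)\pi$, $g_1,g_2\in B_{k-1}$, $\pi\in C_2$, and multiplication $(g_1,g_2)\pi\cdot(h_1,h_2)\rho=(g_1h_{\pi(1)},g_2h_{\pi(2)})\pi\rho$; $B_k$ acts faithfully on the set $X^k$ of words of length $k$ (of size $2^k$). Define $G_1=\{e\}$ and, for $k>1$, $G_k=\{(g_1,g_2)\pi\in B_k : g_1g_2\in G_{k-1}\}$. *)

(* Defs.v *)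
From HB Require Import structures.
From mathcomp Require Import all_boot fingroup perm morphism pgroup sylow alt.
Set Implicit Arguments. Unset Strict Implicit. Unset Printing Implicit Defensive.

(* X = {1,2} is encoded as bool (letter 1 = false, letter 2 = true);
   words of length k are k.-tuple bool; sigma = (1,2) is negation.
   An element of B_k is represented by the permutation of X^k it induces
   (the action is faithful).  [decomp p g1 g2 pi] says p = (g1,g2)pi, i.e.
   p(x w) = pi(x) g_x(w), where pi = true means sigma.  MathComp composes
   permutations left-to-right ((p*q) t = q (p t)), which makes the product
   of permutations coincide with the wreath-recursion multiplication
   (g1,g2)pi (h1,h2)rho = (g1 h_{pi(1)}, g2 h_{pi(2)}) pi rho. *)
Definition decomp (k : nat) (p : {perm k.+1.-tuple bool})
  (g1 g2 : {perm k.-tuple bool}) (pi : bool) : bool :=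
  [forall t : k.+1.-tuple bool,
     p t == cons_tuple (thead t (+) pi)
                       ((if thead t then g2 else g1) (behead_tuple t))].

Fixpoint B (k : nat) : {set {perm k.-tuple bool}} :=
  match k return {set {perm k.-tuple bool}} with
  | 0 => [set 1%g]
  | k'.+1 => [set p | [exists g1 in B k', exists g2 in B k',
                        exists pi : bool, decomp p g1 g2 pi]]
  end.

(* G_1 = {e};  G_k = {(g1,g2)pi in B_k | g1 g2 in G_{k-1}} for k > 1.
   (G 0 is an unused dummy value.) *)
Fixpoint G (k : nat) : {set {perm k.-tuple bool}} :=
  match k return {set {perm k.-tuple bool}} with
  | 0 => [set 1%g]
  | k'.+1 =>
      if k' == 0 then [set 1%g]
      else [set p | [exists g1 in B k', exists g2 in B k',
                      exists pi : bool, decomp p g1 g2 pi && ((g1 * g2)%g \in G k')]]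
  end.

(* Main.v *)
Require Import Defs.
From HB Require Import structures.
From mathcomp Require Import all_boot fingroup perm morphism pgroup sylow alt.
From mathcomp Require Import zify.
Set Implicit Arguments. Unset Strict Implicit. Unset Printing Implicit Defensive.
Local Open Scope group_scope.


Section Wr.
Variable k : nat.
Local Notation P := {perm k.-tuple bool}.

Lemma behead_consE x (w : k.-tuple bool) : behead_tuple [tuple of x :: w] = w.
Proof. exact: val_inj. Qed.

Lemma cons_tupleI x y (w v : k.-tuple bool) :
  [tuple of x :: w] = [tuple of y :: v] -> x = y /\ w = v.
Proof. by move=> /(congr1 val) [-> /val_inj ->]. Qed.

Definition wr_fun (g1 g2 : P) (pi : bool) (t : k.+1.-tuple bool) : k.+1.-tuple bool :=
  cons_tuple (thead t (+) pi) ((if thead t then g2 else g1) (behead_tuple t)).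

Lemma wr_inj (g1 g2 : P) pi : injective (wr_fun g1 g2 pi).
Proof.
move=> t t'; case/tupleP: t => x w; case/tupleP: t' => y v.
rewrite /wr_fun !theadE !behead_consE => /cons_tupleI [hx hw].
have exy : x = y by move: hx; clear; case: x; case: y; case: pi.
subst y; congr [tuple of _ :: _]; exact: perm_inj hw.
Qed.

Definition wr (g1 g2 : P) pi := perm (@wr_inj g1 g2 pi).

Lemma wrE (g1 g2 : P) pi x (w : k.-tuple bool) :
  wr g1 g2 pi [tuple of x :: w] = [tuple of x (+) pi :: (if x then g2 else g1) w].
Proof. by rewrite permE /wr_fun theadE behead_consE. Qed.

Lemma decompE p (g1 g2 : P) pi : decomp p g1 g2 pi = (p == wr g1 g2 pi).
Proof.
apply/forallP/eqP => [H | ->]; last by move=> t; rewrite permE.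
by apply/permP => t; rewrite permE; apply/eqP/H.
Qed.

Lemma wrM (g1 g2 : P) pi (h1 h2 : P) rho :
  wr g1 g2 pi * wr h1 h2 rho =
  wr (g1 * (if pi then h2 else h1)) (g2 * (if pi then h1 else h2)) (pi (+) rho).
Proof.
apply/permP => t; case/tupleP: t => x w.
rewrite permM !wrE addbA; congr [tuple of _ :: _].
by case: x; case: pi; rewrite /= permM.
Qed.

Lemma wr1 : wr 1 1 false = 1.
Proof.
apply/permP => t; case/tupleP: t => x w.
by rewrite wrE perm1 addbF; case: x; rewrite perm1.
Qed.

Lemma wr_eq (g1 g2 : P) pi (h1 h2 : P) rho :
  wr g1 g2 pi = wr h1 h2 rho -> [/\ g1 = h1, g2 = h2 & pi = rho].
Proof.
move=> E.
have Hx : forall x (w : k.-tuple bool), wr g1 g2 pi [tuple of x :: w] = wr h1 h2 rho [tuple of x :: w] by rewrite E.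
have [w0] : exists w : k.-tuple bool, true by exists [tuple of nseq k false].
move=> _.
have [e1 _] := cons_tupleI (etrans (esym (wrE _ _ _ _ _)) (etrans (Hx false w0) (wrE _ _ _ _ _))).
rewrite !addFb in e1; subst rho.
split => //; apply/permP => w.
  by have [_ ->] := cons_tupleI (etrans (esym (wrE _ _ _ false w)) (etrans (Hx false w) (wrE _ _ _ _ _))).
by have [_ ->] := cons_tupleI (etrans (esym (wrE _ _ _ true w)) (etrans (Hx true w) (wrE _ _ _ _ _))).
Qed.

Lemma wr_split (g1 g2 : P) pi : wr g1 g2 pi = wr g1 1 false * wr 1 g2 false * wr 1 1 pi.
Proof. by rewrite !wrM /= !mulg1 !mul1g; case: pi. Qed.

End Wr.


Lemma inBS k p : reflect (exists g1, exists g2, exists pi,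
   [/\ g1 \in B k, g2 \in B k & p = wr g1 g2 pi]) (p \in B k.+1).
Proof.
rewrite inE; apply: (iffP idP).
  case/existsP=> g1 /andP[h1 /existsP[g2 /andP[h2 /existsP[pi]]]].
  by rewrite decompE => /eqP ->; exists g1, g2, pi.
case=> g1 [g2 [pi [h1 h2 ->]]]; apply/existsP; exists g1; rewrite h1 /=.
apply/existsP; exists g2; rewrite h2 /=; apply/existsP; exists pi.
by rewrite decompE.
Qed.

Lemma B_group k : group_set (B k).
Proof.
elim: k => [|k IH]; apply/group_setP; split.
- by rewrite inE.
- by move=> x y; rewrite !inE => /eqP -> /eqP ->; rewrite mulg1.
- apply/inBS; exists 1, 1, false; rewrite -wr1; split => //;
  exact: (group1 (Group IH)).
- move=> x y /inBS [g1 [g2 [pi [h1 h2 ->]]]] /inBS [f1 [f2 [rho [e1 e2 ->]]]].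
  apply/inBS; rewrite wrM; do 3 eexists; split; last reflexivity;
  by apply: (groupM (G := Group IH)) => //; case: pi.
Qed.

Canonical Bg k := Group (B_group k).

Lemma tperm_map (T U : finType) (f : T -> U) (finj : injective f) a b w :
  tperm (f a) (f b) (f w) = f (tperm a b w).
Proof.
case: (tpermP a b w) => [->|->|na nb]; [exact: tpermL | exact: tpermR|].
by apply: tpermD; rewrite (inj_eq finj) eq_sym; apply/eqP.
Qed.

Lemma odd_transport (T U : finType) (f : T -> U) (finj : injective f)
  (psi : {perm T} -> {perm U}) (psiM : {morph psi : x y / x * y}) (psi1 : psi 1 = 1)
  (psiT : forall a b, psi (tperm a b) = tperm (f a) (f b)) s :
  odd_perm (psi s) = odd_perm s.
Proof.
case: (prod_tpermP s) => ts -> dts.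
rewrite (big_morph psi psiM psi1).
under eq_bigr do rewrite psiT.
rewrite -(big_map (fun t => (f t.1, f t.2)) xpredT (fun t => tperm t.1 t.2)).
rewrite !odd_perm_prod ?size_map //.
by rewrite all_map; apply: sub_all dts => t /=; rewrite (inj_eq finj).
Qed.


Lemma cons_inj k (x : bool) : injective (fun w : k.-tuple bool => [tuple of x :: w]).
Proof. by move=> w v /cons_tupleI []. Qed.

Lemma tperm_cons_other k (x y : bool) (a b w : k.-tuple bool) : x != y ->
  tperm [tuple of x :: a] [tuple of x :: b] [tuple of y :: w] = [tuple of y :: w].
Proof.
move=> nxy; apply: tpermD; apply/eqP => /cons_tupleI [e _]; by rewrite e eqxx in nxy.
Qed.

Lemma odd_L k (g : {perm k.-tuple bool}) : odd_perm (wr g 1 false) = odd_perm g.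
Proof.
apply: (@odd_transport _ _ _ (@cons_inj k false) (fun h => wr h 1 false)).
- by move=> x y; rewrite wrM mulg1.
- exact: wr1.
move=> a b; apply/permP => t; case/tupleP: t => x w; rewrite wrE addbF.
case: x; first by rewrite perm1 tperm_cons_other.
by rewrite (tperm_map (@cons_inj k false)).
Qed.

Lemma odd_R k (g : {perm k.-tuple bool}) : odd_perm (wr 1 g false) = odd_perm g.
Proof.
apply: (@odd_transport _ _ _ (@cons_inj k true) (fun h => wr 1 h false)).
- by move=> x y; rewrite wrM mulg1.
- exact: wr1.
move=> a b; apply/permP => t; case/tupleP: t => x w; rewrite wrE addbF.
case: x; last by rewrite perm1 tperm_cons_other.
by rewrite (tperm_map (@cons_inj k true)).
Qed.

Lemma odd_S0 : odd_perm (wr (1 : {perm 0.-tuple bool}) 1 true) = true.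
Proof.
have -> : wr (1 : {perm 0.-tuple bool}) 1 true = tperm [tuple false] [tuple true].
  apply/permP => t; case/tupleP: t => x w; rewrite wrE addbT.
  rewrite (tuple0 w); case: x; rewrite perm1 /=.
    by rewrite tpermR.
  by rewrite tpermL.
by rewrite odd_tperm.
Qed.

Section Swap.
Variable k : nat.
Definition sw_fun (t : k.+2.-tuple bool) : k.+2.-tuple bool :=
  [tuple of thead (behead_tuple t) :: [tuple of thead t :: behead_tuple (behead_tuple t)]].
Lemma swE x y (w : k.-tuple bool) :
  sw_fun [tuple of x :: [tuple of y :: w]] = [tuple of y :: [tuple of x :: w]].
Proof. by rewrite /sw_fun theadE !behead_consE theadE. Qed.
Lemma sw_inj : injective sw_fun.
Proof.
apply: (can_inj (g := sw_fun)) => t; case/tupleP: t => x t; case/tupleP: t => y w.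
by rewrite !swE.
Qed.
Definition sw := perm sw_inj.
End Swap.

Lemma thead_val n (u : n.+1.-tuple bool) : thead u = head false (val u).
Proof. by case/tupleP: u => x u; rewrite theadE. Qed.

Lemma odd_S k : odd_perm (wr (1 : {perm k.+1.-tuple bool}) 1 true) = false.
Proof.
set X := wr _ _ _; set S' := wr (1 : {perm k.-tuple bool}) 1 true.
have E : X * sw k = sw k * wr S' S' false.
  apply/permP => t; case/tupleP: t => x t; case/tupleP: t => y w.
  apply: val_inj; rewrite !permM /X wrE !permE /sw_fun /wr_fun /=.
  rewrite /S' !if_same !permE /wr_fun /= !if_same perm1 !thead_val /=.
  by rewrite addbF.
have := congr1 (@odd_perm _) E; rewrite !odd_permM addbC => /addbI ->.
by rewrite wr_split !odd_permM odd_L odd_R wr1 odd_perm1 addbF addbb.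
Qed.

Lemma odd_wr k (g1 g2 : {perm k.-tuple bool}) pi :
  odd_perm (wr g1 g2 pi) = odd_perm g1 (+) odd_perm g2 (+) (pi && (k == 0)).
Proof.
rewrite wr_split !odd_permM odd_L odd_R; congr (_ (+) _ (+) _).
case: pi; last by rewrite wr1 odd_perm1.
by case: k g1 g2 => [|k] g1 g2; [rewrite odd_S0 | rewrite odd_S].
Qed.


Lemma G_SS k : G k.+2 = [set p | [exists g1 in B k.+1, exists g2 in B k.+1,
   exists pi : bool, decomp p g1 g2 pi && ((g1 * g2)%g \in G k.+1)]].
Proof. by []. Qed.

Lemma G_BAlt k : G k.+1 = B k.+1 :&: 'Alt_(k.+1.-tuple bool).
Proof.
elim: k => [|k IH].
  apply/setP => p; rewrite in_setI Alt_even [G 1]/= inE.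
  apply/idP/idP.
    move/eqP ->; rewrite odd_perm1 andbT inE.
    by apply/existsP; exists 1; rewrite inE eqxx /=; apply/existsP; exists 1;
       rewrite inE eqxx /=; apply/existsP; exists false; rewrite decompE wr1.
  case/andP => /(@inBS 0 p) [g1 [g2 [pi [h1 h2 ->]]]].
  move: h1 h2; rewrite !inE => /eqP -> /eqP ->.
  rewrite odd_wr odd_perm1 /= andbT; case: pi => //= _.
  by rewrite wr1.
apply/setP => p; rewrite in_setI Alt_even G_SS inE.
apply/idP/idP.
  case/existsP=> g1 /andP[h1 /existsP[g2 /andP[h2 /existsP[pi]]]].
  rewrite decompE IH inE Alt_even odd_permM => /andP[/eqP -> /andP [_ ev]].
  rewrite odd_wr andbF addbF ev andbT.
  by apply/inBS; exists g1, g2, pi.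
case/andP => /inBS [g1 [g2 [pi [h1 h2 ->]]]].
rewrite odd_wr andbF addbF => ev.
apply/existsP; exists g1; rewrite h1 andTb; apply/existsP; exists g2; rewrite h2 andTb.
apply/existsP; exists pi; rewrite decompE eqxx IH inE Alt_even odd_permM ev andbT.
exact: (groupM (G := Bg k.+1)).
Qed.

Lemma arithB k : (2 ^ (2 ^ k - 1) * 2 ^ (2 ^ k - 1) * 2 = 2 ^ (2 ^ k.+1 - 1))%N.
Proof.
rewrite -expnD -expnSr; congr (2 ^ _)%N; have := expn_gt0 2 k; rewrite expnS.
by case: (2 ^ k)%N => // m _; lia.
Qed.

Lemma card_B k : #|B k| = (2 ^ (2 ^ k - 1))%N.
Proof.
elim: k => [|k IH]; first by rewrite /= cards1.
have -> : B k.+1 = [set wr x.1.1 x.1.2 x.2 | x in setX (setX (B k) (B k)) [set: bool]].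
  apply/setP => p; apply/idP/imsetP.
    case/(@inBS k p) => g1 [g2 [pi [h1 h2 ->]]].
    by exists (g1, g2, pi) => //; rewrite !in_setX h1 h2 in_setT.
  case=> [[[g1 g2] pi]]; rewrite !in_setX in_setT andbT => /andP[h1 h2] ->.
  by apply/(@inBS k); exists g1, g2, pi.
rewrite card_imset; last first.
  by move=> [[a b] c] [[d e] f] /= /wr_eq [-> -> ->].
by rewrite !cardsX IH cardsT card_bool arithB.
Qed.


Lemma odd_in_B k : exists2 x, x \in B k.+1 & odd_perm x.
Proof.
elim: k => [|k [x xB ox]].
  exists (wr 1 1 true); last by rewrite odd_wr odd_perm1.
  by apply/(@inBS 0); exists 1, 1, true; rewrite inE eqxx.
exists (wr x 1 false); last by rewrite odd_wr odd_perm1 ox.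
apply/(@inBS k.+1); exists x, 1, false; split => //.
Qed.

Lemma card_BAlt k : #|B k.+1 :&: 'Alt_(k.+1.-tuple bool)| = (2 ^ (2 ^ k.+1 - 2))%N.
Proof.
have [x xB ox] := odd_in_B k.
set H := B k.+1 :&: _.
have E : [set x * y | y in H] = B k.+1 :\: 'Alt_(k.+1.-tuple bool).
  apply/setP => z; rewrite in_setD Alt_even negbK; apply/imsetP/idP.
    case=> y; rewrite in_setI Alt_even => /andP [yB yA] ->.
    rewrite odd_permM ox (negbTE yA) andTb.
    exact: (groupM (G := Bg k.+1)).
  case/andP=> oz zB; exists (x^-1 * z); last by rewrite mulKVg.
  rewrite in_setI Alt_even odd_permM odd_permV ox oz andbT.
  exact: (groupM (G := Bg k.+1) (groupVr (G := Bg k.+1) xB) zB).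
have := cardsID 'Alt_(k.+1.-tuple bool) (B k.+1).
rewrite -/H -E card_imset; last exact: mulgI.
rewrite card_B addnn -mul2n.
have -> : (2 ^ k.+1 - 1 = (2 ^ k.+1 - 2).+1)%N by have := expn_gt0 2 k; rewrite expnS; lia.
by rewrite expnS => /eqP; rewrite eqn_pmul2l // => /eqP.
Qed.

Lemma logn2_double n : logn 2 ((n.*2)`!) = (n + logn 2 (n`!))%N.
Proof.
elim: n => [|n IH] //.
rewrite doubleS !factS.
rewrite !lognM ?fact_gt0 //.
rewrite IH (@logn_coprime 2 n.*2.+1); last by rewrite prime_coprime // dvdn2 /= odd_double.
have -> : (n.*2.+2 = 2 * n.+1)%N by rewrite -mul2n; lia.
rewrite lognM // logn_prime //.
  rewrite eqxx; lia.
by rewrite muln_gt0 fact_gt0.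
Qed.

Lemma logn2_fact k : logn 2 ((2 ^ k)`!) = (2 ^ k - 1)%N.
Proof.
elim: k => [|k IH]; first by [].
rewrite expnS mul2n logn2_double IH; have := expn_gt0 2 k; lia.
Qed.


Section Transport.
Variable k : nat.
Local Notation T := (k.-tuple bool).
Local Notation U := ('I_(2 ^ k)).
Lemma cardT_tuple : #|{: T}| = (2 ^ k)%N.
Proof. by rewrite card_tuple card_bool. Qed.
Definition e (t : T) : U := cast_ord cardT_tuple (enum_rank t).
Definition e' (i : U) : T := enum_val (cast_ord (esym cardT_tuple) i).
Lemma eK : cancel e e'.
Proof. by move=> t; rewrite /e /e' cast_ordK enum_rankK. Qed.
Lemma e'K : cancel e' e.
Proof. by move=> i; rewrite /e /e' enum_valK cast_ordKV. Qed.
Lemma phi_inj (s : {perm T}) : injective (fun i => e (s (e' i))).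
Proof. exact: inj_comp (can_inj eK) (inj_comp (@perm_inj _ s) (can_inj e'K)). Qed.
Definition phi s := perm (@phi_inj s).
Lemma phiM : {morph phi : x y / x * y}.
Proof. by move=> x y; apply/permP => i; rewrite !permM !permE /= eK. Qed.
Canonical phim := @Morphism _ _ [set: {perm T}] phi (in2W phiM).
Lemma phi_injm : 'injm phim.
Proof.
apply/injmP => x y _ _ E; apply/permP => t.
have := congr1 (fun s : {perm U} => s (e t)) E; rewrite /= !permE /= eK.
exact: (can_inj eK).
Qed.
Lemma odd_phi s : odd_perm (phi s) = odd_perm s.
Proof.
apply: (@odd_transport _ _ _ (can_inj eK) phi phiM).
  by apply/permP => i; rewrite permE /= !perm1 e'K.
by move=> a b; apply/permP => i; rewrite permE /= -(tperm_map (can_inj eK)) e'K.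
Qed.
End Transport.

Close Scope group_scope.

Theorem mainTheorem13 (k : nat) (hk : 1 <= k) :
  exists P : {group {perm 'I_(2 ^ k)}},
    P \in ('Syl_2('Alt_('I_(2 ^ k))))%g /\ (G k \isog P)%g.
Proof.
case: k hk => // k _.
exists (phim k.+1 @* (Bg k.+1 :&: 'Alt_(k.+1.-tuple bool))%G)%G; split.
  rewrite inE pHallE; apply/andP; split.
    apply/subsetP => y /morphimP [x _ xH ->].
    by rewrite Alt_even odd_phi -Alt_even; case/setIP: xH.
  rewrite card_injm ?phi_injm ?subsetT // card_BAlt p_part; apply/eqP.
  congr (2 ^ _)%N.
  have h1 : (1 < #|'I_(2 ^ k.+1)|)%N by rewrite card_ord expnS; have := expn_gt0 2 k; lia.
  have := congr1 (logn 2) (card_Alt h1).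
  rewrite card_ord logn2_fact lognM ?cardG_gt0 // logn_prime //= => h.
  apply/eqP; rewrite -(eqn_add2l 1) h; apply/eqP; rewrite expnS; have := expn_gt0 2 k; lia.
rewrite G_BAlt; exact: sub_isog (subsetT _) (phi_injm k.+1).
Qed.
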